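(* Let $n_1,n_2,n_3$ be integers with $3\le n_1,n_2\le n_3$ and $3\max(n_1,n_2)\le 2n_3\le n_1n_2$. Then the Middle Cone Construction described below can be carried out (in particular, when $n_2$ is odd and $k\le1$, a left column with first coordinate not in $\{1,2,n_1\}$ and second coordinate $1$ exists), and for every set $W$ it produces, in the landmark graph $\mathcal{G}(W)$ every hyperedge of color $3$ has exactly two vertices, and every hyperedge of color $1$ and every hyperedge of color $2$ has at least three vertices.
   Context: $K(\mathbf{n})=K_{n_1}\times K_{n_2}\times K_{n_3}$: vertices are triples $(x_1,x_2,x_3)$, $1\le x_i\le n_i$, adjacent iff they differ in every coordinate. For a vertex set $W$, $W_{i,a}=\{w\in W:w_i=a\}$, and the landmark graph $\mathcal{G}(W)$ is the hypergraph on $W$ whose hyperedges are the nonempty $W_{i,a}$, colored $i$. Multiplicities: write $n_3=qn_1+r$, $0\le r\le n_1-1$. If $r\le n_1-r$, $(\ell_1,\dots,\ell_{n_1})$ is $(q+1,q)$ repeated $r$ times followed by $n_1-2r$ copies of $q$; if $r>n_1-r$, it is $(q+1,q)$ repeated $n_1-r$ times followed by $2r-n_1$ copies of $q+1$. Let $L_i=\sum_{j<i}\ell_j$, so block $i$ consists of columns $c$ with $L_i<c\le L_i+\ell_i$; $s_i=L_i+1$ is the start of block $i$. Middle Cone Construction: $W=W^L\cup W^R$, where $W^L$ (left) and $W^R$ (right) each consist of $n_3$ landmarks indexed by columns $c=1,\dots,n_3$. Left column $c$ in block $i$ is $(i,\,y^L_c,\,c)$; right column $c$ in block $i$ is $(i+1,\,y^R_c,\,c)$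 with $n_1+1$ read as $1$. Even $n_2$, $h=n_2/2$: $y^L_c=((c-1)\bmod h)+1$ and $y^R_c=h+((c-1)\bmod h)+1$. Odd $n_2$, $f=(n_2-1)/2$, $k=\#\{i:\ell_i>f\}$. Choose a set $S$ of ''neutral'' left columns: if $k\ge2$, $S=\{s_i:\ell_i>f\}$; if $k\le1$, $S=\{1\}$. Set $y^L_c=n_2$ for $c\in S$, and fill the remaining left columns, in increasing order of $c$, with the periodic sequence $1,2,\dots,f,1,2,\dots,f,\dots$. Set $y^R_c=n_2$ for $c\in S+1$, and fill the remaining right columns in increasing order with $f+1,\dots,2f,f+1,\dots,2f,\dots$. If $k\le1$, additionally choose one left landmark of the form $(x,1,z)$ with $x\notin\{1,2,n_1\}$ and change its second coordinate to $n_2$ (any such choice is allowed). *)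

(* Defs.v *)
(* Everything is 1-indexed as in the paper. *)
From mathcomp Require Import all_boot.
Set Implicit Arguments. Unset Strict Implicit. Unset Printing Implicit Defensive.

Section MiddleCone.
Variables n1 n2 n3 : nat.

Definition q := n3 %/ n1.
Definition r := n3 %% n1.

Definition ell (i : nat) : nat :=
  if r <= n1 - r then
    (if i <= 2 * r then (if odd i then q.+1 else q) else q)
  else
    (if i <= 2 * (n1 - r) then (if odd i then q.+1 else q) else q.+1).

Definition Lsum (i : nat) : nat := \sum_(1 <= j < i) ell j.

Definition start (i : nat) : nat := (Lsum i).+1.

(* block containing column c: number of blocks i in 1..n1 starting at or
   before c (the theorem proves this is the block with L_i < c <= L_i + ell_i) *)
Definition block (c : nat) : nat := count (fun i => start i <= c) (iota 1 n1).

Definition h := n2 %/ 2.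
Definition f := (n2 - 1) %/ 2.
Definition kcount : nat := count (fun i => f < ell i) (iota 1 n1).

Definition inS (c : nat) : bool :=
  if 2 <= kcount then has (fun i => (f < ell i) && (start i == c)) (iota 1 n1)
  else c == 1.

Definition rankL (c : nat) : nat := count (fun c' => ~~ inS c') (iota 1 c).
Definition inS1 (c : nat) : bool := inS c.-1 && (1 < c).
Definition rankR (c : nat) : nat := count (fun c' => ~~ inS1 c') (iota 1 c).

Definition yL (c : nat) : nat :=
  if ~~ odd n2 then ((c - 1) %% h).+1
  else if inS c then n2 else ((rankL c - 1) %% f).+1.

Definition yR (c : nat) : nat :=
  if ~~ odd n2 then h + ((c - 1) %% h).+1
  else if inS1 c then n2 else f + ((rankR c - 1) %% f).+1.

Definition triple := (nat * nat * nat)%type.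

(* the modification in case n2 odd and k <= 1 is encoded by the column z
   of the modified left landmark: mz = Some z *)
Definition leftLm (mz : option nat) (c : nat) : triple :=
  (block c, (if mz == Some c then n2 else yL c), c).

Definition rightLm (c : nat) : triple := ((block c %% n1).+1, yR c, c).

Definition validChoice (z : nat) : Prop :=
  [/\ 1 <= z <= n3, block z \notin [:: 1; 2; n1] & yL z = 1].

Definition validMod (mz : option nat) : Prop :=
  if odd n2 && (kcount <= 1) then exists2 z, mz = Some z & validChoice z
  else mz = None.

Definition Wset (mz : option nat) : seq triple :=
  undup ([seq leftLm mz c | c <- iota 1 n3] ++ [seq rightLm c | c <- iota 1 n3]).

Definition coord (i : nat) (w : triple) : nat :=
  match i with 1 => w.1.1 | 2 => w.1.2 | _ => w.2 end.

Definition dim (i : nat) : nat := match i with 1 => n1 | 2 => n2 | _ => n3 end.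

Definition Wia (mz : option nat) (i a : nat) : seq triple :=
  [seq w <- Wset mz | coord i w == a].

Definition is_vertex (w : triple) : Prop :=
  forall i, 1 <= i <= 3 -> 1 <= coord i w <= dim i.

End MiddleCone.

(* Main.v *)
Require Import Defs.
From mathcomp Require Import all_boot zify.
Set Implicit Arguments. Unset Strict Implicit.



Lemma qr_facts n1 n3 : 0 < n1 -> n1 <= n3 ->
  [/\ 1 <= q n1 n3, r n1 n3 < n1 & n3 = q n1 n3 * n1 + r n1 n3].
Proof.
move=> h1 h2; rewrite /q /r; split.
- by rewrite divn_gt0.
- by rewrite ltn_pmod.
- exact: divn_eq.
Qed.

Lemma ell_bounds n1 n3 i : q n1 n3 <= ell n1 n3 i <= (q n1 n3).+1.
Proof. rewrite /ell; repeat case: ifP => _; lia. Qed.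

Lemma Lsum_rec n1 n3 i : 1 <= i -> Lsum n1 n3 i.+1 = Lsum n1 n3 i + ell n1 n3 i.
Proof. by move=> hi; rewrite /Lsum big_nat_recr. Qed.

Lemma Lsum1 n1 n3 : Lsum n1 n3 1 = 0.
Proof. by rewrite /Lsum big_geq. Qed.

Lemma Lsum_closed n1 n3 i : r n1 n3 <= n1 ->
  Lsum n1 n3 i.+1 = i * q n1 n3 +
    (if i <= 2 * minn (r n1 n3) (n1 - r n1 n3) then (i+1) %/ 2
     else minn (r n1 n3) (n1 - r n1 n3) +
       (if r n1 n3 <= n1 - r n1 n3 then 0 else i - 2 * minn (r n1 n3) (n1 - r n1 n3))).
Proof.
move=> hr; elim: i => [|i IH]; first by rewrite Lsum1.
rewrite Lsum_rec // IH /ell.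
set Q := q n1 n3; set R := r n1 n3.
repeat case: ifP => ?; lia.
Qed.

Lemma Lsum0 n1 n3 : Lsum n1 n3 0 = 0.
Proof. by rewrite /Lsum big_geq. Qed.

Lemma Lsum_total n1 n3 : 0 < n1 -> n1 <= n3 -> Lsum n1 n3 n1.+1 = n3.
Proof.
move=> h1 h2; case: (qr_facts h1 h2) => hq hr he.
rewrite Lsum_closed; last by lia.
move: hq hr he; set Q := q n1 n3; set R := r n1 n3 => hq hr he.
repeat case: ifP => ?; lia.
Qed.

Lemma Lsum_mono n1 n3 i j : i <= j -> Lsum n1 n3 i <= Lsum n1 n3 j.
Proof.
elim: j => [|j IH]; first by rewrite leqn0 => /eqP ->.
rewrite leq_eqVlt => /orP [/eqP -> //|] /IH H.
case: j H {IH} => [|j] H; first by rewrite Lsum1 Lsum0 in H *.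
rewrite Lsum_rec //; lia.
Qed.

Lemma count_antitone (P : pred nat) n :
  (forall i j, 1 <= i <= j -> P j -> P i) ->
  count P (iota 1 n) <= n /\
  forall i, 1 <= i <= n -> P i = (i <= count P (iota 1 n)).
Proof.
move=> HP; elim: n => [|n [IH1 IH2]]; first by split => // i; lia.
have E := iotaD 1 n 1; rewrite addn1 add1n in E.
rewrite E count_cat /= addn0 {E}.
case HPn: (P n.+1) => /=.
- have Hn : count P (iota 1 n) = n.
    case: n IH1 IH2 HPn => [|n] IH1 IH2 HPn; first by move: IH1; rewrite leqn0 => /eqP.
    apply/eqP; rewrite eqn_leq IH1 /= -IH2 ?leqnn //.
    by apply: (HP _ n.+2) => //; lia.
  rewrite Hn; split; first by lia.
  move=> i hi; rewrite (HP i n.+1) //; lia.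
- split; first by lia.
  move=> i hi; case: (ltnP i n.+1) => hin.
  + by rewrite addn0 IH2 //; lia.
  + have -> : i = n.+1 by lia.
    by rewrite HPn addn0; apply/esym/negbTE; rewrite -ltnNge; lia.
Qed.

Lemma block_count n1 n3 c :
  block n1 n3 c <= n1 /\
  forall i, 1 <= i <= n1 -> (Lsum n1 n3 i < c) = (i <= block n1 n3 c).
Proof.
apply: count_antitone => i j hij /= hj.
apply: leq_ltn_trans hj; apply: Lsum_mono; lia.
Qed.

Lemma block_spec n1 n3 c : 0 < n1 -> n1 <= n3 -> 1 <= c <= n3 ->
  1 <= block n1 n3 c <= n1 /\
  Lsum n1 n3 (block n1 n3 c) < c <= Lsum n1 n3 (block n1 n3 c) + ell n1 n3 (block n1 n3 c).
Proof.
move=> h1 h2 hc; case: (block_count n1 n3 c) => hb H.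
set b := block n1 n3 c in hb H *.
have b1 : 1 <= b by rewrite -H ?Lsum1 //; lia.
split; first by lia.
rewrite -Lsum_rec //; apply/andP; split; first by rewrite H //; lia.
case: (ltnP b n1) => hbn.
- by rewrite leqNgt H ?ltnn //; lia.
- have -> : b = n1 by lia.
  by rewrite Lsum_total //; lia.
Qed.

Lemma block_eq n1 n3 x c : 1 <= x <= n1 ->
  Lsum n1 n3 x < c <= Lsum n1 n3 x + ell n1 n3 x -> block n1 n3 c = x.
Proof.
move=> hx hc; case: (block_count n1 n3 c) => hb H.
have h1 : x <= block n1 n3 c by rewrite -H //; lia.
case: (ltnP x n1) => hxn; last by lia.
have : ~~ (Lsum n1 n3 x.+1 < c) by rewrite Lsum_rec; lia.
rewrite H; lia.
Qed.

Lemma ell_odd_big n1 n3 x : n1 <= 2 * r n1 n3 -> r n1 n3 < n1 -> odd x -> x <= n1 ->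
  ell n1 n3 x = (q n1 n3).+1.
Proof. move=> *; rewrite /ell; repeat case: ifP => ?; lia. Qed.

Lemma ell2 n1 n3 : r n1 n3 < n1 -> ell n1 n3 2 = q n1 n3.
Proof. move=> *; rewrite /ell; repeat case: ifP => ?; lia. Qed.

Lemma ell1 n1 n3 : 1 <= r n1 n3 < n1 -> ell n1 n3 1 = (q n1 n3).+1.
Proof. move=> *; rewrite /ell; repeat case: ifP => ?; lia. Qed.

Lemma ell3 n1 n3 : 2 <= r n1 n3 < n1 -> ell n1 n3 3 = (q n1 n3).+1.
Proof. move=> *; rewrite /ell; repeat case: ifP => ?; lia. Qed.

Lemma elln1 n1 n3 : r n1 n3 <= 1 -> 4 <= n1 -> ell n1 n3 n1 = q n1 n3.
Proof. move=> *; rewrite /ell; repeat case: ifP => ?; lia. Qed.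

Definition prev n1 x := if x == 1 then n1 else x.-1.

Lemma ell_pair n1 n3 x : 3 <= n1 -> 3 * n1 <= 2 * n3 -> 1 <= x <= n1 ->
  3 <= ell n1 n3 x + ell n1 n3 (prev n1 x).
Proof.
move=> h1 h3 hx.
have h2 : n1 <= n3 by lia.
case: (qr_facts (ltnW (ltnW h1)) h2) => hq hr he.
have b1 := ell_bounds n1 n3 x; have b2 := ell_bounds n1 n3 (prev n1 x).
case: (ltnP 1 (q n1 n3)) => hq2; first by lia.
have hq1 : q n1 n3 = 1 by lia.
have hr2 : n1 <= 2 * r n1 n3 by rewrite he hq1 mul1n in h3; lia.
rewrite /prev in b2 *; case: (x =P 1) b2 => [->|hx1] b2.
- rewrite (ell_odd_big (x:=1)) //; lia.
- case Ho: (odd x).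
  + rewrite (ell_odd_big (x:=x)) //; lia.
  + rewrite (ell_odd_big (x:=x.-1)) //; try lia.
Qed.

Lemma yL_range n1 n2 n3 c : 3 <= n2 -> 1 <= yL n1 n2 n3 c <= n2.
Proof. move=> *; rewrite /yL /h /f; repeat case: ifP => ?; lia. Qed.

Lemma yR_range n1 n2 n3 c : 3 <= n2 -> 1 <= yR n1 n2 n3 c <= n2.
Proof. move=> *; rewrite /yR /h /f; repeat case: ifP => ?; lia. Qed.

Lemma mem_Wset n1 n2 n3 mz w : w \in Wset n1 n2 n3 mz ->
  exists2 c, 1 <= c <= n3 & (w = leftLm n1 n2 n3 mz c \/ w = rightLm n1 n2 n3 c).
Proof.
rewrite /Wset mem_undup mem_cat => /orP [] /mapP [c]; rewrite mem_iota => hc ->;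
  exists c; try lia; by [left|right].
Qed.

Lemma left_in n1 n2 n3 mz c : 1 <= c <= n3 -> leftLm n1 n2 n3 mz c \in Wset n1 n2 n3 mz.
Proof.
move=> hc; rewrite /Wset mem_undup mem_cat; apply/orP; left.
apply: map_f; rewrite mem_iota; lia.
Qed.

Lemma right_in n1 n2 n3 mz c : 1 <= c <= n3 -> rightLm n1 n2 n3 c \in Wset n1 n2 n3 mz.
Proof.
move=> hc; rewrite /Wset mem_undup mem_cat; apply/orP; right.
apply: map_f; rewrite mem_iota; lia.
Qed.

Lemma mem_Wia n1 n2 n3 mz i a w :
  (w \in Wia n1 n2 n3 mz i a) = (coord i w == a) && (w \in Wset n1 n2 n3 mz).
Proof. by rewrite mem_filter. Qed.

Lemma three_le n1 n2 n3 mz i a u v w : uniq [:: u; v; w] ->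
  u \in Wia n1 n2 n3 mz i a -> v \in Wia n1 n2 n3 mz i a -> w \in Wia n1 n2 n3 mz i a ->
  3 <= size (Wia n1 n2 n3 mz i a).
Proof.
move=> U hu hv hw; apply: (uniq_leq_size (s1 := [:: u; v; w])) => // x.
by rewrite !inE => /orP [/eqP ->|/orP [/eqP ->|/eqP ->]].
Qed.

Lemma neq3 (a b c a' b' c' : nat) : c != c' -> (a, b, c) != (a', b', c').
Proof. by move=> H; apply/eqP => [[_ _ E]]; rewrite E eqxx in H. Qed.

Lemma left_neq_right n1 n2 n3 mz c c' : 3 <= n1 -> n1 <= n3 -> 1 <= c <= n3 ->
  leftLm n1 n2 n3 mz c != rightLm n1 n2 n3 c'.
Proof.
move=> h1 h2 hc; case: (eqVneq c c') => [<-|ne]; last by apply: neq3.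
have [hb _] := block_spec (ltnW (ltnW h1)) h2 hc.
apply/eqP; rewrite /leftLm /rightLm => [[E _]].
move: E hb; set b := block n1 n3 c => E hb.
case: (ltnP b n1) => hbn.
- by rewrite modn_small // in E; lia.
- have bn : b = n1 by lia.
  by rewrite bn modnn in E; lia.
Qed.

Lemma nonempty_mem (T : eqType) (s : seq T) : s != [::] -> exists x, x \in s.
Proof. by case: s => // x s _; exists x; rewrite inE eqxx. Qed.

Lemma col_in n1 n3 x k : 0 < n1 -> n1 <= n3 -> 1 <= x <= n1 -> 1 <= k <= ell n1 n3 x ->
  block n1 n3 (Lsum n1 n3 x + k) = x /\ 1 <= Lsum n1 n3 x + k <= n3.
Proof.
move=> h1 h2 hx hk; split; first by apply: block_eq => //; lia.
have := Lsum_mono n1 n3 (i := x.+1) (j := n1.+1); rewrite Lsum_total // Lsum_rec; lia.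
Qed.

Lemma vertex_part n1 n2 n3 mz w : 3 <= n1 -> 3 <= n2 -> n1 <= n3 ->
  w \in Wset n1 n2 n3 mz -> is_vertex n1 n2 n3 w.
Proof.
move=> h1 h2 h3 /mem_Wset [c hc hw] i hi.
have [hb _] := block_spec (ltnW (ltnW h1)) h3 hc.
have yl := yL_range n1 n3 c h2; have yr := yR_range n1 n3 c h2.
case: hw => -> {w}; rewrite /leftLm /rightLm;
  (have : i = 1 \/ i = 2 \/ i = 3 by lia); case => [->|[->|->]] /=; try lia.
- by case: eqP => _; lia.
Qed.

Lemma col3_part n1 n2 n3 mz a : 3 <= n1 -> n1 <= n3 ->
  Wia n1 n2 n3 mz 3 a != [::] -> size (Wia n1 n2 n3 mz 3 a) = 2.
Proof.
move=> h1 h3 /nonempty_mem [w]; rewrite mem_Wia => /andP [/eqP ha /mem_Wset [c hc hw]].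
have ca : c = a by case: hw ha => -> .
subst c.
apply/eqP; rewrite eqn_leq; apply/andP; split.
- apply: (uniq_leq_size (s2 := [:: leftLm n1 n2 n3 mz a; rightLm n1 n2 n3 a])).
    by apply: filter_uniq; apply: undup_uniq.
  move=> x; rewrite mem_Wia => /andP [/eqP hx /mem_Wset [c' hc' hw']].
  by case: hw' hx => -> /= ->; rewrite !inE eqxx ?orbT.
- apply: (uniq_leq_size (s1 := [:: leftLm n1 n2 n3 mz a; rightLm n1 n2 n3 a])).
    by rewrite /= inE andbT; apply: left_neq_right.
  move=> x; rewrite !inE => /orP [] /eqP ->; rewrite mem_Wia /=.
  + by rewrite eqxx left_in.
  + by rewrite eqxx right_in.
Qed.

Lemma uniq3 (T : eqType) (u v w : T) : u != v -> u != w -> v != w -> uniq [:: u; v; w].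
Proof. by move=> a b c; rewrite /= !inE negb_or a b c. Qed.

Lemma col1_part n1 n2 n3 mz x : 3 <= n1 -> n1 <= n3 -> 3 * n1 <= 2 * n3 ->
  Wia n1 n2 n3 mz 1 x != [::] -> 3 <= size (Wia n1 n2 n3 mz 1 x).
Proof.
move=> h1 h3 h4 /nonempty_mem [w]; rewrite mem_Wia => /andP [/eqP ha /mem_Wset [c hc hw]].
have h0 : 0 < n1 by lia.
have [hb _] := block_spec h0 h3 hc.
have hx : 1 <= x <= n1.
  case: hw ha => -> /= <-; first by lia.
  have : block n1 n3 c %% n1 < n1 by rewrite ltn_pmod.
  lia.
set p := prev n1 x.
have hp : 1 <= p <= n1 by rewrite /p /prev; case: (x =P 1); lia.
have hpx : p != x by rewrite /p /prev; case: (x =P 1) => E; apply/eqP; lia.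
have hpm : (p %% n1).+1 = x.
  rewrite /p /prev; case: (x =P 1) => [->|]; first by rewrite modnn.
  by move=> ?; rewrite modn_small; lia.
have [hq _ _] := qr_facts h0 h3.
have ex := ell_bounds n1 n3 x; have ep := ell_bounds n1 n3 p.
have e3 := ell_pair h1 h4 hx; rewrite -/p in e3.
have [bx1 cx1] := col_in (k := 1) h0 h3 hx (ltac:(lia)).
have [bp1 cp1] := col_in (k := 1) h0 h3 hp (ltac:(lia)).
have Lx : forall k, 1 <= k <= ell n1 n3 x ->
    leftLm n1 n2 n3 mz (Lsum n1 n3 x + k) \in Wia n1 n2 n3 mz 1 x.
  move=> k hk; have [bk ck] := col_in h0 h3 hx hk.
  by rewrite mem_Wia /= bk eqxx left_in.
have Rp : forall k, 1 <= k <= ell n1 n3 p ->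
    rightLm n1 n2 n3 (Lsum n1 n3 p + k) \in Wia n1 n2 n3 mz 1 x.
  move=> k hk; have [bk ck] := col_in h0 h3 hp hk.
  by rewrite mem_Wia /= bk hpm eqxx right_in.
have dxp : forall k l, 1 <= k <= ell n1 n3 x -> 1 <= l <= ell n1 n3 p ->
    Lsum n1 n3 x + k != Lsum n1 n3 p + l.
  move=> k l hk hl; apply/eqP => E.
  have [bk _] := col_in h0 h3 hx hk; have [bl _] := col_in h0 h3 hp hl.
  by move: hpx; rewrite -bk -bl E eqxx.
case: (ltnP 1 (ell n1 n3 x)) => hex.
- have [_ cx2] := col_in (k := 2) h0 h3 hx (ltac:(lia)).
  apply: (three_le (u := leftLm n1 n2 n3 mz (Lsum n1 n3 x + 1))
                   (v := leftLm n1 n2 n3 mz (Lsum n1 n3 x + 2))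
                   (w := rightLm n1 n2 n3 (Lsum n1 n3 p + 1))).
  + apply: uniq3; first (by apply: neq3; apply/eqP; lia); by apply: left_neq_right => //; lia.
  + by apply: Lx; lia.
  + by apply: Lx; lia.
  + by apply: Rp; lia.
- have [_ cp2] := col_in (k := 2) h0 h3 hp (ltac:(lia)).
  apply: (three_le (u := leftLm n1 n2 n3 mz (Lsum n1 n3 x + 1))
                   (v := rightLm n1 n2 n3 (Lsum n1 n3 p + 1))
                   (w := rightLm n1 n2 n3 (Lsum n1 n3 p + 2))).
  + apply: uniq3; try (by apply: left_neq_right => //; lia).
    by apply: neq3; apply/eqP; lia.
  + by apply: Lx; lia.
  + by apply: Rp; lia.
  + by apply: Rp; lia.
Qed.

Lemma iotaS1 n : iota 1 n.+1 = iota 1 n ++ [:: n.+1].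
Proof. by have E := iotaD 1 n 1; rewrite addn1 add1n in E. Qed.

Lemma rank_exists (P : pred nat) n rho : 1 <= rho <= count P (iota 1 n) ->
  exists c, [/\ 1 <= c <= n, P c & count P (iota 1 c) = rho].
Proof.
elim: n => [|n IH]; first by rewrite /=; lia.
rewrite iotaS1 count_cat /= addn0 => hr.
case: (leqP rho (count P (iota 1 n))) => h.
- have [c [hc pc cc]] : exists c, [/\ 1 <= c <= n, P c & count P (iota 1 c) = rho] by apply: IH; lia.
  by exists c; split => //; lia.
- case Pn: (P n.+1) hr => /= hr; last by lia.
  exists n.+1; split => //; first by lia.
  by rewrite iotaS1 count_cat /= Pn; lia.
Qed.

Lemma count_has_le (P : pred nat) (g : nat -> nat) (s t : seq nat) : uniq t ->
  count (fun c => has (fun i => P i && (g i == c)) s) t <= count P s.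
Proof.
move=> Ut; elim: s => [|i s IH] /=; first by rewrite count_pred0.
have E := count_predUI (fun c => P i && (g i == c)) (fun c => has (fun i => P i && (g i == c)) s) t.
have -> : count (fun c => (P i && (g i == c)) || has (fun i => P i && (g i == c)) s) t =
          count (predU (fun c => P i && (g i == c)) (fun c => has (fun i => P i && (g i == c)) s)) t by [].
have : count (fun c => P i && (g i == c)) t <= P i.
  case: (P i) => /=; last by rewrite count_pred0.
  have := count_uniq_mem (g i) Ut.
  have -> : count (fun c => g i == c) t = count (pred1 (g i)) t.
    by apply: eq_count => c; rewrite /= eq_sym.
  by move=> ->; case: (_ \in _).
lia.
Qed.

Lemma count_all (P : pred nat) s : (forall x, x \in s -> P x) -> count P s = size s.
Proof. by move=> H; apply/eqP; rewrite -all_count; apply/allP. Qed.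

Lemma count_none (P : pred nat) s : (forall x, x \in s -> ~~ P x) -> count P s = 0.
Proof.
elim: s => //= x s IH H; rewrite (negbTE (H x _)) ?inE ?eqxx //= IH // => y hy.
by apply: H; rewrite inE hy orbT.
Qed.

Lemma count_ge2 (P : pred nat) s a b : uniq s -> a \in s -> b \in s -> a != b -> P a -> P b ->
  2 <= count P s.
Proof.
move=> U ha hb ab pa pb; rewrite -size_filter.
apply: (uniq_leq_size (s1 := [:: a; b])); first by rewrite /= inE ab.
by move=> x; rewrite !inE mem_filter => /orP [] /eqP ->; apply/andP.
Qed.

Lemma two_of (P : pred nat) s : uniq s -> 2 <= count P s ->
  exists i j : nat, [/\ i \in s, j \in s, i != j, P i & P j].
Proof.
move=> U; rewrite -size_filter => H.
move: H; set s' := filter P s => H.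
have U' : uniq s' by apply: filter_uniq.
have m0 : nth 0 s' 0 \in s' by apply: mem_nth; exact: ltnW H.
have m1 : nth 0 s' 1 \in s' by apply: mem_nth; exact: H.
exists (nth 0 s' 0), (nth 0 s' 1).
move: m0 m1; rewrite !mem_filter => /andP [p0 i0] /andP [p1 i1]; split => //.
by rewrite nth_uniq // ltnW.
Qed.

Lemma resid t k H : t < H -> (t + k * H) %% H = t.
Proof. by move=> h; rewrite addnC modnMDl modn_small. Qed.

Lemma pick3 (z c1 c2 c3 c4 : nat) : c1 <> c2 -> c1 <> c3 -> c1 <> c4 -> c2 <> c3 -> c2 <> c4 -> c3 <> c4 ->
  exists a b c, [/\ a <> b, a <> c, b <> c, a <> z /\ b <> z /\ c <> z &
    (a = c1 \/ a = c2 \/ a = c3 \/ a = c4) /\ (b = c1 \/ b = c2 \/ b = c3 \/ b = c4) /\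
    (c = c1 \/ c = c2 \/ c = c3 \/ c = c4)].
Proof.
move=> *.
case: (eqVneq z c1) => [->|/eqP ?]; first by exists c2, c3, c4; split; lia.
case: (eqVneq z c2) => [->|/eqP ?]; first by exists c1, c3, c4; split; lia.
case: (eqVneq z c3) => [->|/eqP ?]; first by exists c1, c2, c4; split; lia.
by exists c1, c2, c3; split; lia.
Qed.

Lemma Lsum_lower n1 n3 F m : (forall i, F <= ell n1 n3 i) ->
  m * F + count (fun i => F < ell n1 n3 i) (iota 1 m) <= Lsum n1 n3 m.+1.
Proof.
move=> HF; elim: m => [|m IH]; first by rewrite Lsum1.
rewrite Lsum_rec // iotaS1 count_cat /= addn0.
move: IH; set C := count _ (iota 1 m) => IH.
rewrite mulSn; clearbody C; have := HF m.+1; case: (ltnP F (ell n1 n3 m.+1)) => /= h h2; lia.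
Qed.

Lemma kcount_bound n1 n2 n3 : 0 < n1 -> n1 <= n3 -> f n2 <= q n1 n3 ->
  n1 * f n2 + kcount n1 n2 n3 <= n3.
Proof.
move=> h1 h2 hq; rewrite /kcount.
apply: (@leq_trans (Lsum n1 n3 n1.+1)); last by rewrite Lsum_total.
apply: (@Lsum_lower n1 n3 (f n2) n1) => i; have := ell_bounds n1 n3 i; lia.
Qed.

Lemma inS_small n1 n2 n3 c : kcount n1 n2 n3 <= 1 -> inS n1 n2 n3 c = (c == 1).
Proof. by rewrite /inS leqNgt => /negbTE ->. Qed.

Lemma inS_big n1 n2 n3 c : 2 <= kcount n1 n2 n3 ->
  inS n1 n2 n3 c = has (fun i => (f n2 < ell n1 n3 i) && (start n1 n3 i == c)) (iota 1 n1).
Proof. by rewrite /inS => ->. Qed.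

Lemma n2_odd n2 : odd n2 -> n2 = 2 * f n2 + 1.
Proof. rewrite /f; lia. Qed.

Lemma exist_part n1 n2 n3 : 3 <= n1 -> 3 <= n2 -> n1 <= n3 -> n2 <= n3 ->
  3 * maxn n1 n2 <= 2 * n3 -> 2 * n3 <= n1 * n2 ->
  odd n2 -> kcount n1 n2 n3 <= 1 -> validChoice n1 n2 n3 (2 * f n2 + 2).
Proof.
move=> h1 h2 h3 h4 h5 h6 ho hk.
have eF := n2_odd ho; set F := f n2 in eF *.
have h0 : 0 < n1 by lia.
have [hq hr he] := qr_facts h0 h3.
have n1_4 : 4 <= n1.
  case: (ltnP 3 n1) => // hn; have e3 : n1 = 3 by lia.
  rewrite e3 in h6 h5; lia.
have n3F : 3 * F + 2 <= n3 by lia.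
have qF : q n1 n3 <= F.
  case: (leqP (q n1 n3) F) => // hqF.
  have : kcount n1 n2 n3 = n1.
    rewrite /kcount count_all ?size_iota // => i _.
    have := ell_bounds n1 n3 i; rewrite -/F; lia.
  lia.
have rF : q n1 n3 = F -> r n1 n3 <= 1.
  move=> eq; case: (leqP (r n1 n3) 1) => // hr2.
  have : 2 <= kcount n1 n2 n3.
    apply: (count_ge2 (a := 1) (b := 3)); rewrite ?iota_uniq ?mem_iota //; try lia.
    - by rewrite /= ell1 -/F; lia.
    - by rewrite /= ell3 -/F; lia.
  lia.
have en1 : ell n1 n3 n1 <= F.
  have := ell_bounds n1 n3 n1.
  case: (ltnP (q n1 n3) F) => hh; first by lia.
  have eq : q n1 n3 = F by lia.
  by rewrite elln1 ?rF //; lia.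
have L3 : Lsum n1 n3 3 <= 2 * F + 1.
  rewrite (@Lsum_rec n1 n3 2) // (@Lsum_rec n1 n3 1) // Lsum1 ell2 //.
  have := ell_bounds n1 n3 1; lia.
have Ln1 : 2 * F + 2 <= Lsum n1 n3 n1.
  have := Lsum_total h0 h3; rewrite Lsum_rec; lia.
have hz : 1 <= 2 * F + 2 <= n3 by lia.
have [hb /andP [hl hu]] := block_spec h0 h3 hz.
move: hl hu; rewrite -Lsum_rec; last by lia.
set b := block n1 n3 (2 * F + 2) => hl hu.
have b3 : 3 <= b.
  case: (ltnP 2 b) => // hb2.
  have := Lsum_mono n1 n3 (i := b.+1) (j := 3); lia.
have bn : b < n1.
  case: (ltnP b n1) => // hbn.
  have : b = n1 by lia.
  move=> E; rewrite E in hl; lia.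
split => //.
- rewrite !inE; apply/negP => /orP [/eqP E|/orP [/eqP E|/eqP E]]; lia.
- rewrite /yL ho /= inS_small //.
  have -> : (2 * F + 2 == 1) = false by apply/eqP; lia.
  rewrite /rankL (eq_count (a2 := fun c => c != 1)); last by move=> c; rewrite inS_small.
  rewrite -/F.
  have -> : iota 1 (2 * F + 2) = 1 :: iota 2 (2 * F + 1) by rewrite addn2 addn1.
  rewrite /= count_all ?size_iota; last by move=> x; rewrite mem_iota => hx; apply/eqP; lia.
  have -> : 2 * F + 1 - 1 = F * 2 by lia.
  by rewrite modnMr.
Qed.

Lemma countS_small n1 n2 n3 : kcount n1 n2 n3 <= 1 -> count (inS n1 n2 n3) (iota 1 n3) <= 1.
Proof.
move=> hk; rewrite (eq_count (a2 := pred1 1)); last by move=> c; rewrite inS_small.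
by rewrite count_uniq_mem ?iota_uniq //; case: (_ \in _).
Qed.

Lemma countS_big n1 n2 n3 : 2 <= kcount n1 n2 n3 ->
  count (inS n1 n2 n3) (iota 1 n3) <= kcount n1 n2 n3.
Proof.
move=> hk; rewrite (eq_count (a2 := fun c => has (fun i => (f n2 < ell n1 n3 i) && (start n1 n3 i == c)) (iota 1 n1))); last by move=> c; rewrite inS_big.
by apply: count_has_le; apply: iota_uniq.
Qed.

Lemma countS1 n1 n2 n3 M : count (inS1 n1 n2 n3) (iota 1 M) <= count (inS n1 n2 n3) (iota 1 M).
Proof.
case: M => [|m] //.
have E : count (inS1 n1 n2 n3) (iota 1 m.+1) = count (inS n1 n2 n3) (iota 1 m).
  have -> : iota 1 m.+1 = 1 :: iota (1 + 1) m by [].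
  rewrite iotaDl /= count_map.
  have -> : inS1 n1 n2 n3 1 = false by rewrite /inS1 andbF.
  rewrite add0n; apply: eq_in_count => c; rewrite mem_iota => hc /=.
  by rewrite /inS1 add1n /=; case: c hc => // c _; rewrite andbT.
by rewrite E iotaS1 count_cat leq_addr.
Qed.

Lemma countC (P : pred nat) s : count (fun c => ~~ P c) s = size s - count P s.
Proof. by rewrite -(count_predC P s) addKn. Qed.

Lemma left_mem n1 n2 n3 mz c y : 1 <= c <= n3 ->
  (if mz == Some c then n2 else yL n1 n2 n3 c) = y ->
  leftLm n1 n2 n3 mz c \in Wia n1 n2 n3 mz 2 y.
Proof. by move=> hc hy; rewrite mem_Wia left_in // andbT /= hy. Qed.

Lemma right_mem n1 n2 n3 mz c y : 1 <= c <= n3 -> yR n1 n2 n3 c = y ->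
  rightLm n1 n2 n3 c \in Wia n1 n2 n3 mz 2 y.
Proof. by move=> hc hy; rewrite mem_Wia right_in // andbT /= hy. Qed.

Lemma odd_left_col n1 n2 n3 y k : odd n2 -> 1 <= y <= f n2 ->
  y + k * f n2 <= count (fun c => ~~ inS n1 n2 n3 c) (iota 1 n3) ->
  exists c, [/\ 1 <= c <= n3, yL n1 n2 n3 c = y & rankL n1 n2 n3 c = y + k * f n2].
Proof.
move=> ho hy hT.
have [c [hc pc rc]] := @rank_exists (fun c => ~~ inS n1 n2 n3 c) n3 (y + k * f n2) (ltac:(apply/andP; split; [lia| exact hT])).
exists c; split => //.
rewrite /yL ho /= (negbTE pc) /rankL rc.
have -> : y + k * f n2 - 1 = (y - 1) + k * f n2 by lia.
rewrite resid; lia.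
Qed.

Lemma odd_right_col n1 n2 n3 y k : odd n2 -> f n2 + 1 <= y <= 2 * f n2 ->
  (y - f n2) + k * f n2 <= count (fun c => ~~ inS1 n1 n2 n3 c) (iota 1 n3) ->
  exists c, [/\ 1 <= c <= n3, yR n1 n2 n3 c = y & rankR n1 n2 n3 c = (y - f n2) + k * f n2].
Proof.
move=> ho hy hT.
have [c [hc pc rc]] := @rank_exists (fun c => ~~ inS1 n1 n2 n3 c) n3 (y - f n2 + k * f n2) (ltac:(apply/andP; split; [lia| exact hT])).
exists c; split => //.
rewrite /yR ho /= (negbTE pc) /rankR rc.
have -> : y - f n2 + k * f n2 - 1 = (y - f n2 - 1) + k * f n2 by lia.
rewrite resid; lia.
Qed.

Lemma three_left n1 n2 n3 mz y c1 c2 c3 :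
  c1 <> c2 -> c1 <> c3 -> c2 <> c3 -> 1 <= c1 <= n3 -> 1 <= c2 <= n3 -> 1 <= c3 <= n3 ->
  (if mz == Some c1 then n2 else yL n1 n2 n3 c1) = y ->
  (if mz == Some c2 then n2 else yL n1 n2 n3 c2) = y ->
  (if mz == Some c3 then n2 else yL n1 n2 n3 c3) = y ->
  3 <= size (Wia n1 n2 n3 mz 2 y).
Proof.
move=> d12 d13 d23 h1 h2 h3 e1 e2 e3.
apply: (three_le (u := leftLm n1 n2 n3 mz c1) (v := leftLm n1 n2 n3 mz c2) (w := leftLm n1 n2 n3 mz c3));
  try by apply: left_mem.
by apply: uniq3; apply: neq3; apply/eqP.
Qed.

Lemma three_right n1 n2 n3 mz y c1 c2 c3 :
  c1 <> c2 -> c1 <> c3 -> c2 <> c3 -> 1 <= c1 <= n3 -> 1 <= c2 <= n3 -> 1 <= c3 <= n3 ->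
  yR n1 n2 n3 c1 = y -> yR n1 n2 n3 c2 = y -> yR n1 n2 n3 c3 = y ->
  3 <= size (Wia n1 n2 n3 mz 2 y).
Proof.
move=> d12 d13 d23 h1 h2 h3 e1 e2 e3.
apply: (three_le (u := rightLm n1 n2 n3 c1) (v := rightLm n1 n2 n3 c2) (w := rightLm n1 n2 n3 c3));
  try by apply: right_mem.
by apply: uniq3; apply: neq3; apply/eqP.
Qed.

Lemma col2_even n1 n2 n3 y : 3 <= n1 -> 3 <= n2 -> n1 <= n3 -> 3 * n2 <= 2 * n3 -> ~~ odd n2 ->
  Wia n1 n2 n3 None 2 y != [::] -> 3 <= size (Wia n1 n2 n3 None 2 y).
Proof.
move=> h1 h2 h3 h5 ho /nonempty_mem [w]; rewrite mem_Wia => /andP [/eqP hy /mem_Wset [c hc hw]].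
have eH : n2 = 2 * h n2 by move: ho; rewrite /h; lia.
set H := h n2 in eH.
have yLe : forall c, yL n1 n2 n3 c = ((c - 1) %% H).+1 by move=> c'; rewrite /yL ho.
have yRe : forall c, yR n1 n2 n3 c = H + ((c - 1) %% H).+1 by move=> c'; rewrite /yR ho.
have Hp : 0 < H by lia.
have rs : forall t k, t < H -> (t + k * H) %% H = t by move=> t k; apply: resid.
case: hw hy => -> /= <-.
- rewrite yLe; set yy := ((c - 1) %% H).+1.
  have hy : 1 <= yy <= H by rewrite /yy; have := ltn_pmod (c - 1) Hp; lia.
  have ey : forall k, yL n1 n2 n3 (yy + k * H) = yy.
    move=> k; rewrite yLe (_ : yy + k * H - 1 = (yy - 1) + k * H); last by lia.
    rewrite rs; lia.
  apply: (three_left (c1 := yy + 0 * H) (c2 := yy + 1 * H) (c3 := yy + 2 * H)); try lia; by rewrite /= ey.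
- rewrite yRe; set yy := ((c - 1) %% H).+1.
  have hy : 1 <= yy <= H by rewrite /yy; have := ltn_pmod (c - 1) Hp; lia.
  have ey : forall k, yR n1 n2 n3 (yy + k * H) = H + yy.
    move=> k; rewrite yRe (_ : yy + k * H - 1 = (yy - 1) + k * H); last by lia.
    rewrite rs; lia.
  apply: (three_right None (c1 := yy + 0 * H) (c2 := yy + 1 * H) (c3 := yy + 2 * H)); try lia; by rewrite ey.
Qed.

Lemma yL_odd n1 n2 n3 c : 3 <= n2 -> odd n2 -> yL n1 n2 n3 c = n2 \/ 1 <= yL n1 n2 n3 c <= f n2.
Proof.
move=> h2 ho; rewrite /yL ho /=; case: ifP => _; [by left | right].
have hf : 0 < f n2 by rewrite /f; lia.
 have := ltn_pmod (rankL n1 n2 n3 c - 1) hf; lia.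
Qed.

Lemma yR_odd n1 n2 n3 c : 3 <= n2 -> odd n2 -> yR n1 n2 n3 c = n2 \/ f n2 + 1 <= yR n1 n2 n3 c <= 2 * f n2.
Proof.
move=> h2 ho; rewrite /yR ho /=; case: ifP => _; [by left | right].
have hf : 0 < f n2 by rewrite /f; lia.
have := ltn_pmod (rankR n1 n2 n3 c - 1) hf; lia.
Qed.

Lemma T_bounds n1 n2 n3 : 3 <= n1 -> 3 <= n2 -> n1 <= n3 -> 3 * n2 <= 2 * n3 -> odd n2 ->
  [/\ 3 * f n2 <= count (fun c => ~~ inS n1 n2 n3 c) (iota 1 n3),
      3 * f n2 <= count (fun c => ~~ inS1 n1 n2 n3 c) (iota 1 n3) &
      kcount n1 n2 n3 <= 1 -> 3 * f n2 + 1 <= count (fun c => ~~ inS n1 n2 n3 c) (iota 1 n3)].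
Proof.
move=> h1 h2 h3 h5 ho.
have eF := n2_odd ho.
have h0 : 0 < n1 by lia.
rewrite !countC size_iota.
have c1 := countS1 n1 n2 n3 n3.
have TL : 3 * f n2 <= n3 - count (inS n1 n2 n3) (iota 1 n3).
  case: (leqP (kcount n1 n2 n3) 1) => hk.
  - have := countS_small hk; lia.
  - have := countS_big hk.
    have hq : f n2 <= q n1 n3.
      case: (leqP (f n2) (q n1 n3)) => // hq.
      have : kcount n1 n2 n3 = 0.
        rewrite /kcount; apply: count_none => i _; have := ell_bounds n1 n3 i; lia.
      lia.
    have := kcount_bound h0 h3 hq.
    have : 3 * f n2 <= n1 * f n2 by rewrite leq_mul2r h1 orbT.
    lia.
split => //; first by lia.
move=> hk; have := countS_small hk; lia.
Qed.

Lemma opt_neq (z c : nat) : z <> c -> (Some z == Some c) = false.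
Proof. by move=> H; apply/eqP => [[E]]. Qed.

Lemma col2_odd n1 n2 n3 mz y : 3 <= n1 -> 3 <= n2 -> n1 <= n3 -> 3 * n2 <= 2 * n3 -> odd n2 ->
  validMod n1 n2 n3 mz ->
  Wia n1 n2 n3 mz 2 y != [::] -> 3 <= size (Wia n1 n2 n3 mz 2 y).
Proof.
move=> h1 h2 h3 h5 ho hmz /nonempty_mem [w]; rewrite mem_Wia => /andP [/eqP hy /mem_Wset [c hc hw]].
have eF := n2_odd ho.
have h0 : 0 < n1 by lia.
have [TL TR TL1] := T_bounds h1 h2 h3 h5 ho.
have Fp : 0 < f n2 by rewrite /f; lia.
have yr : y = n2 \/ 1 <= y <= f n2 \/ f n2 + 1 <= y <= 2 * f n2.
  case: hw hy => -> /= <-.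
  - case: ifP => _; first by left.
    have := yL_odd n1 n3 c h2 ho; lia.
  - have := yR_odd n1 n3 c h2 ho; lia.
clear w c hc hw hy.
case: yr => [hyn|[hyl|hyr]].
-
  subst y.
  move: hmz; rewrite /validMod ho /=; case: (leqP (kcount n1 n2 n3) 1) => hk.
  + move=> [z -> [hz hbz hyz]].
    have z1 : z <> 1.
      move=> E; subst z; move: hyz; rewrite /yL ho /= inS_small // eqxx; lia.
    apply: (three_le (u := leftLm n1 n2 n3 (Some z) 1) (v := leftLm n1 n2 n3 (Some z) z)
                     (w := rightLm n1 n2 n3 2)).
    * apply: uniq3; try (by apply: left_neq_right => //; lia).
      by apply: neq3; apply/eqP; apply/nesym.
    * apply: left_mem; first by lia.
      by case: ifP => // _; rewrite /yL ho /= inS_small // eqxx.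
    * by apply: left_mem; [lia | rewrite eqxx].
    * apply: right_mem; first by lia.
      by rewrite /yR ho /= /inS1 /= inS_small.
  + move=> ->.
    have [i [j [hi hj dij pi pj]]] := two_of (iota_uniq 1 n1) hk.
    move: hi hj; rewrite !mem_iota => hi hj.
    have eli := ell_bounds n1 n3 i.
    have [bi1 ci1] := col_in (k := 1) h0 h3 (ltac:(lia) : 1 <= i <= n1) (ltac:(lia)).
    have [bi2 ci2] := col_in (k := 2) h0 h3 (ltac:(lia) : 1 <= i <= n1) (ltac:(lia)).
    have [bj1 cj1] := col_in (k := 1) h0 h3 (ltac:(lia) : 1 <= j <= n1) (ltac:(lia)).
    have inSi : forall x, 1 <= x <= n1 -> f n2 < ell n1 n3 x -> inS n1 n2 n3 (Lsum n1 n3 x + 1).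
      move=> x hx px; rewrite inS_big //; apply/hasP; exists x; first by rewrite mem_iota; lia.
      by rewrite px /start addn1 eqxx.
    apply: (three_le (u := leftLm n1 n2 n3 None (Lsum n1 n3 i + 1))
                     (v := leftLm n1 n2 n3 None (Lsum n1 n3 j + 1))
                     (w := rightLm n1 n2 n3 (Lsum n1 n3 i + 2))).
    * apply: uniq3; try (by apply: left_neq_right => //; lia).
      apply: neq3; apply/eqP => E.
      by move: dij; rewrite -bi1 -bj1 E eqxx.
    * apply: left_mem => //.
      by rewrite /yL ho /= inSi //; lia.
    * apply: left_mem => //.
      by rewrite /yL ho /= inSi //; lia.
    * apply: right_mem => //.
      rewrite /yR ho /= /inS1 (_ : (Lsum n1 n3 i + 2).-1 = Lsum n1 n3 i + 1); last by lia.
      rewrite inSi //.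
      by have -> : (1 < Lsum n1 n3 i + 2) = true by lia.
-
  move: hmz; rewrite /validMod ho /=; case: (leqP (kcount n1 n2 n3) 1) => hk.
  + move=> [z -> [hz hbz hyz]].
    have z1 : z <> 1.
      move=> E; subst z; move: hyz; rewrite /yL ho /= inS_small // eqxx; lia.
    case: (ltnP 1 y) => hy1.
    * have [c1 [hc1 e1 r1]] := @odd_left_col n1 n2 n3 y 0 ho hyl (ltac:(lia)).
      have [c2 [hc2 e2 r2]] := @odd_left_col n1 n2 n3 y 1 ho hyl (ltac:(lia)).
      have [c3 [hc3 e3 r3]] := @odd_left_col n1 n2 n3 y 2 ho hyl (ltac:(lia)).
      apply: (three_left (c1 := c1) (c2 := c2) (c3 := c3)) => //;
        try (move=> E; subst; lia);
        rewrite opt_neq //; move=> E; subst; lia.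
    * have ey : y = 1 by lia.
      subst y.
      have [c1 [hc1 e1 r1]] := @odd_left_col n1 n2 n3 1 0 ho hyl (ltac:(lia)).
      have [c2 [hc2 e2 r2]] := @odd_left_col n1 n2 n3 1 1 ho hyl (ltac:(lia)).
      have [c3 [hc3 e3 r3]] := @odd_left_col n1 n2 n3 1 2 ho hyl (ltac:(lia)).
      have [c4 [hc4 e4 r4]] := @odd_left_col n1 n2 n3 1 3 ho hyl (ltac:(have := TL1 hk; lia)).
      have [a [b [c [dab dac dbc [az [bz cz]] [ha [hb hc]]]]]] :=
        pick3 (c1 := c1) (c2 := c2) (c3 := c3) (c4 := c4) z (ltac:(move=> E; subst; lia)) (ltac:(move=> E; subst; lia)) (ltac:(move=> E; subst; lia))
                (ltac:(move=> E; subst; lia)) (ltac:(move=> E; subst; lia)) (ltac:(move=> E; subst; lia)).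
      have P : forall x, (x = c1 \/ x = c2 \/ x = c3 \/ x = c4) -> 1 <= x <= n3 /\ yL n1 n2 n3 x = 1.
        by move=> x [->|[->|[->|->]]].
      have [ra ya] := P a ha; have [rb yb] := P b hb; have [rc yc] := P c hc.
      apply: (three_left (c1 := a) (c2 := b) (c3 := c)) => //; rewrite opt_neq //; by apply/nesym.
  + move=> ->.
    have [c1 [hc1 e1 r1]] := @odd_left_col n1 n2 n3 y 0 ho hyl (ltac:(lia)).
    have [c2 [hc2 e2 r2]] := @odd_left_col n1 n2 n3 y 1 ho hyl (ltac:(lia)).
    have [c3 [hc3 e3 r3]] := @odd_left_col n1 n2 n3 y 2 ho hyl (ltac:(lia)).
    by apply: (three_left (c1 := c1) (c2 := c2) (c3 := c3)) => //; move=> E; subst; lia.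
-
  have [c1 [hc1 e1 r1]] := @odd_right_col n1 n2 n3 y 0 ho hyr (ltac:(lia)).
  have [c2 [hc2 e2 r2]] := @odd_right_col n1 n2 n3 y 1 ho hyr (ltac:(lia)).
  have [c3 [hc3 e3 r3]] := @odd_right_col n1 n2 n3 y 2 ho hyr (ltac:(lia)).
  apply: (three_right mz (c1 := c1) (c2 := c2) (c3 := c3)) => //;
    move=> E; subst; lia.
Qed.

Unset Implicit Arguments.

Theorem mainTheorem6 (n1 n2 n3 : nat) :
  3 <= n1 -> 3 <= n2 -> n1 <= n3 -> n2 <= n3 ->
  3 * maxn n1 n2 <= 2 * n3 -> 2 * n3 <= n1 * n2 ->
  (* the blocks partition the columns 1..n3 *)
  (forall c, 1 <= c <= n3 ->
     1 <= block n1 n3 c <= n1 /\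
     Lsum n1 n3 (block n1 n3 c) < c <= Lsum n1 n3 (block n1 n3 c) + ell n1 n3 (block n1 n3 c)) /\
  (* the required left landmark exists when n2 is odd and k <= 1 *)
  (odd n2 -> kcount n1 n2 n3 <= 1 -> exists z, validChoice n1 n2 n3 z) /\
  (* every admissible output W is a set of vertices with the stated hyperedge sizes *)
  (forall mz, validMod n1 n2 n3 mz ->
     (forall w, w \in Wset n1 n2 n3 mz -> is_vertex n1 n2 n3 w) /\
     (forall a, Wia n1 n2 n3 mz 3 a != [::] -> size (Wia n1 n2 n3 mz 3 a) = 2) /\
     (forall i a, i \in [:: 1; 2] -> Wia n1 n2 n3 mz i a != [::] ->
        3 <= size (Wia n1 n2 n3 mz i a))).
Proof.
move=> h1 h2 h3 h4 h5 h6.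
have h0 : 0 < n1 by lia.
split; first by move=> c hc; apply: block_spec.
split; first by move=> ho hk; exists (2 * f n2 + 2); apply: exist_part.
move=> mz hmz; split; [|split].
- by move=> w hw; apply: vertex_part hw.
- by move=> a; apply: col3_part.
- move=> i a; rewrite !inE => /orP [/eqP ->|/eqP ->].
  + by apply: col1_part => //; lia.
  + case Ho: (odd n2).
    * by apply: col2_odd => //; lia.
    * have -> : mz = None by move: hmz; rewrite /validMod Ho.
      by apply: col2_even => //; [lia | rewrite Ho].
Qed.
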